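(* Let $\mathcal{S}=(\sigma_{ij})\in\mathrm{SL}(2,\mathbb{Z})$ with $\mathrm{tr}(\mathcal{S})>2$, let $\lambda>1$ be its eigenvalue greater than $1$, and let $P$ be a real matrix with $\det P=1$ and $P\mathcal{S}P^{-1}=\mathrm{diag}(1/\lambda,\lambda)$. Let $A=\begin{pmatrix}1&0\\0&-1\end{pmatrix}$ and let $\mathbb{Z}_\Phi=\langle \mathbf{t}_3\rangle\times\langle\bar\alpha\rangle\cong\mathbb{Z}\times\mathbb{Z}_2$. Then there is no homomorphism $\varphi:\mathbb{Z}_\Phi\to\mathrm{GL}(2,\mathbb{Z})$ with $\varphi(\mathbf{t}_3)=\mathcal{S}$ and $\varphi(\bar\alpha)=P^{-1}AP$.
   Context: Here $\mathbb{Z}_\Phi$ is the extension of $\mathbb{Z}=\langle\mathbf{t}_3\rangle$ by $\Phi=\langle A\rangle\cong\mathbb{Z}_2$ with $\bar\alpha=(\mathbf{t}_3^0,A)$ commuting with $\mathbf{t}_3$ (since $A$ is diagonal it acts trivially on the $\mathbb{R}$-factor of $\mathrm{Sol}^3$). *)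

(* Defs.v *)
From HB Require Import structures.
From mathcomp Require Import all_boot all_order all_algebra.
Set Implicit Arguments. Unset Strict Implicit. Unset Printing Implicit Defensive.
Import Order.TTheory GRing.Theory Num.Theory.
Local Open Scope ring_scope.

Definition ZPhi := (int * 'Z_2)%type.
Definition t3 : ZPhi := (1%:Z, 0).
Definition alphabar : ZPhi := (0%:Z, 1).

Definition is_hom_GL2Z (phi : ZPhi -> 'M[int]_2) : Prop :=
  (forall x, phi x \in unitmx) /\ (forall x y, phi (x + y) = phi x *m phi y).

Definition Amx (R : ringType) : 'M[R]_2 := \matrix_(i, j) (if i == j then (if i == 0 then 1 else -1) else 0).
Definition intmx (R : ringType) (M : 'M[int]_2) : 'M[R]_2 := map_mx (fun z : int => z%:~R) M.

(* Main.v *)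
From HB Require Import structures.
Require Import Defs.
From mathcomp Require Import all_boot all_order all_algebra.
From mathcomp Require Import zify ring.
Import Order.TTheory GRing.Theory Num.Theory.

Lemma sqn (n k m : nat) : (0 < k)%N -> (n * k ^ 2 = m ^ 2)%N -> n = (m %/ k) ^ 2.
Proof.
move=> k0 h.
have hd : (k %| m)%N by rewrite -(@dvdn_pexp2r k m 2) // -h dvdn_mull.
move: h; rewrite -{1}(divnK hd) expnMn => /eqP.
by rewrite eqn_pmul2r ?expn_gt0 ?k0 // => /eqP.
Qed.

Local Open Scope ring_scope.
Lemma noint (t k m : int) : 2 < t -> k != 0 -> (t ^+ 2 - 4) * k ^+ 2 = m ^+ 2 -> False.
Proof.
move=> ht hk h.
have := @sqn (absz (t ^+ 2 - 4)) (absz k) (absz m).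
rewrite absz_gt0 hk => /(_ isT).
have: ((absz (t ^+ 2 - 4)) * (absz k) ^ 2 = (absz m) ^ 2)%N.
  by rewrite -!abszX -abszM h.
move=> H /(_ H); set u := (_ %/ _)%N => hu.
have hu' : t ^+ 2 - 4 = (u%:Z) ^+ 2.
  rewrite -(@gez0_abs (t ^+ 2 - 4)); last by nia.
  by rewrite hu expr2 expnS expn1.
have h0 : (0 <= u%:Z) by [].
have [hl|hl] := leP (u%:Z) (t - 1).
  have : 0 <= (t - 1 - u%:Z) * (t - 1 + u%:Z) by apply: mulr_ge0; lia.
  have -> : (t - 1 - u%:Z) * (t - 1 + u%:Z) = (t ^+ 2 - 4) - u%:Z ^+ 2 + 5 - 2 * t by ring.
  rewrite hu' subrr add0r; lia.
have : 0 <= (u%:Z - t) * (u%:Z + t) by apply: mulr_ge0; lia.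
have -> : (u%:Z - t) * (u%:Z + t) = u%:Z ^+ 2 - (t ^+ 2 - 4) - 4 by ring.
rewrite hu' subrr add0r; lia.
Qed.

Lemma det2 (R : comNzRingType) (M : 'M[R]_2) : \det M = M 0 0 * M 1 1 - M 0 1 * M 1 0.
Proof.
rewrite (expand_det_row _ 0) !big_ord_recr big_ord0 /= /cofactor !det_mx11 !mxE /=.
rewrite expr0 expr1 add0r mul1r mulN1r mulrN.
by congr (M _ _ * M _ _ - M _ _ * M _ _); apply/val_inj.
Qed.

Lemma tr2 (R : comNzRingType) (M : 'M[R]_2) : \tr M = M 0 0 + M 1 1.
Proof.
rewrite /mxtrace !big_ord_recr big_ord0 /= add0r.
by congr (M _ _ + M _ _); apply/val_inj.
Qed.


Lemma mul2E (R : comNzRingType) (A B : 'M[R]_2) i j :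
  (A *m B) i j = A i 0 * B 0 j + A i 1 * B 1 j.
Proof.
rewrite mxE !big_ord_recr big_ord0 /= add0r.
by congr (A _ _ * B _ _ + A _ _ * B _ _); apply/val_inj.
Qed.

Theorem lemma3p4 (R : realFieldType) (S : 'M[int]_2) (lam : R) (P : 'M[R]_2) :
  \det S = 1 -> \tr S > 2 ->
  eigenvalue (intmx R S) lam -> 1 < lam ->
  \det P = 1 ->
  P *m intmx R S *m invmx P = diag_mx (\row_(i < 2) (if i == 0 then lam^-1 else lam)) ->
  ~ exists phi : ZPhi -> 'M[int]_2,
      [/\ is_hom_GL2Z phi, phi t3 = S & intmx R (phi alphabar) = invmx P *m Amx R *m P].
Proof.
move=> hdS htS _ _ hdP _ [phi [[_ hmul] h3 hA]].
set B := phi alphabar in hA.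
have hcomm : S *m B = B *m S by rewrite -h3 /B -!hmul addrC.
have Pu : P \in unitmx by rewrite unitmxE hdP unitr1.
have hdA : \det (Amx R) = -1 by rewrite det2 !mxE /= mul1r mulr0 subr0.
have htA : \tr (Amx R) = 0 by rewrite tr2 !mxE /= subrr.
have hdB : \det B = -1.
  apply: (@intr_inj R); rewrite /= -[LHS](det_map_mx (ssrint_intmul__canonical__GRing_RMorphism R)).
  rewrite -/(intmx R B) hA !det_mulmx det_inv hdP hdA invr1 mul1r mulr1.
  by rewrite rmorphN rmorph1.
have htB : \tr B = 0.
  apply: (@intr_inj R); rewrite /= -[LHS](trace_map_mx (ssrint_intmul__canonical__GRing_RMorphism R)).
  rewrite -/(intmx R B) hA -mulmxA mxtrace_mulC -mulmxA mulmxV // mulmx1 htA.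
  by rewrite rmorph0.
move: hdS htS hdB htB; rewrite !det2 !tr2 => hdS htS hdB htB.
have e01 := congr1 (fun M : 'M[int]_2 => M 0 1) hcomm.
have e00 := congr1 (fun M : 'M[int]_2 => M 0 0) hcomm.
have e10 := congr1 (fun M : 'M[int]_2 => M 1 0) hcomm.
move: e00 e01 e10; rewrite /= !mul2E => e00 e01 e10.
move: hdS htS hdB htB e00 e01 e10.
set a := S 0 0; set b := S 0 1; set c := S 1 0; set d := S 1 1.
set p := B 0 0; set q := B 0 1; set r := B 1 0; set s := B 1 1.
move=> hdS htS hdB htB e00 e01 e10.
have hs : s = - p by apply/eqP; rewrite -subr_eq0 opprK addrC htB.
rewrite hs in hdB e01 e10.
have f1 : q * (a - d) = 2 * b * p.
  have -> : q * (a - d) = (a * q + b * - p) - (p * b + q * d) + 2 * b * p by ring.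
  by rewrite e01; ring.
have f2 : 2 * c * p = r * (a - d).
  have -> : r * (a - d) = (r * a + - p * c) - (c * p + d * r) + 2 * c * p by ring.
  by rewrite e10; ring.
have hB1 : p ^+ 2 + q * r = 1.
  have -> : p ^+ 2 + q * r = - (p * - p - q * r) by ring.
  by rewrite hdB opprK.
have hd1 : 4 * (a * d - b * c - 1) = 0 by rewrite hdS subrr mulr0.
have g1 : ((a + d) ^+ 2 - 4) * p ^+ 2 = (a - d) ^+ 2.
  have -> : ((a + d) ^+ 2 - 4) * p ^+ 2 = (a - d) ^+ 2 * (p ^+ 2 + q * r)
     + p ^+ 2 * (4 * (a * d - b * c - 1)) + (2 * b * p - q * (a - d)) * (2 * c * p)
     + q * (a - d) * (2 * c * p - r * (a - d)) by ring.
  by rewrite hB1 hd1 f1 f2 !subrr; ring.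
have f3 : q * c = b * r.
  have -> : q * c = (p * a + q * c) - p * a by ring.
  by rewrite -e00; ring.
have g2 : ((a + d) ^+ 2 - 4) * q ^+ 2 = (2 * b) ^+ 2.
  have -> : ((a + d) ^+ 2 - 4) * q ^+ 2 = (2 * b) ^+ 2 * (p ^+ 2 + q * r)
     + q ^+ 2 * (4 * (a * d - b * c - 1)) + (q * (a - d) - 2 * b * p) * (q * (a - d) + 2 * b * p)
     + 4 * b * q * (q * c - b * r) by ring.
  by rewrite hB1 hd1 f1 f3 !subrr; ring.
have [p0|p0] := eqVneq p 0.
  apply: (@noint (a + d) q (2 * b)) => //.
  by apply/eqP => q0; move: hB1; rewrite p0 q0 mul0r expr0n addr0.
exact: (@noint (a + d) p (a - d)).
Qed.
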